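(* Let $n,s$ be integers with $(n+1)/3\le s\le n/2$ and let $L=[s]=\{1,\ldots,s\}$. If $\mathcal{F}\subseteq 2^{[n]}$ is $L$-close Sperner, then $$|\mathcal{F}|\le\sum_{i=3s-n}^{s}\binom{n}{i}.$$
   Context: $[n]=\{1,\ldots,n\}$ and $2^{[n]}$ is the family of all subsets of $[n]$. For a set $L$ of positive integers, $\mathcal{F}\subseteq2^{[n]}$ is $L$-close Sperner if for all distinct $A,B\in\mathcal{F}$, the skew distance $\mathrm{sd}(A,B)=\min\{|A\setminus B|,|B\setminus A|\}$ lies in $L$. *)

(* Defs.v *)
From mathcomp Require Import all_boot.
Set Implicit Arguments. Unset Strict Implicit. Unset Printing Implicit Defensive.

(* Ground set [n] is modelled by 'I_n (elements 0..n-1); subsets are {set 'I_n}. *)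
Definition skew_dist (n : nat) (A B : {set 'I_n}) : nat :=
  minn #|A :\: B| #|B :\: A|.

Definition close_sperner (n : nat) (L : pred nat) (F : {set {set 'I_n}}) : Prop :=
  forall A B, A \in F -> B \in F -> A != B -> skew_dist A B \in L.

Definition range1 (s : nat) : pred nat := fun d => (1 <= d <= s).

(* Main.v *)
Require Import Defs.
From mathcomp Require Import all_boot all_algebra zify ring.
Set Implicit Arguments. Unset Strict Implicit. Unset Printing Implicit Defensive.

Lemma sum_bool_card (T : finType) (P Q : pred T) :
  \sum_(x | P x) (Q x : nat) = #|[set x | P x && Q x]|.
Proof.
rewrite -sum1dep_card big_mkcondr /=; apply: eq_bigr => x _; by case: (Q x).
Qed.

Lemma cs_elim n s (F : {set {set 'I_n}}) A B :
  close_sperner (range1 s) F -> A \in F -> B \in F -> A != B ->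
  [/\ 0 < #|A :\: B|, 0 < #|B :\: A| & (#|A :\: B| <= s) || (#|B :\: A| <= s)].
Proof.
move=> cF AF BF nAB; have := cF A B AF BF nAB.
rewrite /skew_dist /range1 unfold_in /= => /andP[h1 h2].
rewrite leq_min in h1; case/andP: h1 => -> ->; split => //.
by rewrite geq_min in h2.
Qed.

Lemma cs_intro n s (F : {set {set 'I_n}}) :
  (forall A B, A \in F -> B \in F -> A != B ->
     [/\ 0 < #|A :\: B|, 0 < #|B :\: A| & (#|A :\: B| <= s) || (#|B :\: A| <= s)]) ->
  close_sperner (range1 s) F.
Proof.
move=> h A B AF BF nAB; case: (h A B AF BF nAB) => h1 h2 h3.
by rewrite /skew_dist /range1 unfold_in /= leq_min h1 h2 geq_min.
Qed.

Lemma cardD_gt0 n (A B : {set 'I_n}) : (0 < #|A :\: B|) = ~~ (A \subset B).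
Proof. by rewrite card_gt0 setD_eq0. Qed.

Lemma cs_sub n s (F : {set {set 'I_n}}) A C :
  close_sperner (range1 s) F -> A \in F -> C \in F -> A \subset C -> A = C.
Proof.
move=> cF AF CF AC; apply/eqP; apply: contraT => nAC.
by case: (cs_elim cF AF CF nAC); rewrite cardD_gt0 AC.
Qed.

Lemma cs_compl n s (F : {set {set 'I_n}}) :
  close_sperner (range1 s) F -> close_sperner (range1 s) [set ~: A | A in F].
Proof.
move=> cF; apply: cs_intro => X Y /imsetP[A AF ->] /imsetP[B BF ->] nAB.
have nBA : B != A by apply: contraNneq nAB => ->.
have e1 : ~: A :\: ~: B = B :\: A by rewrite setDE setCK setIC -setDE.
have e2 : ~: B :\: ~: A = A :\: B by rewrite setDE setCK setIC -setDE.
by rewrite e1 e2; case: (cs_elim cF BF AF nBA).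
Qed.

Lemma card_compl n (A : {set 'I_n}) : #|~: A| = n - #|A|.
Proof. have := cardsC A; rewrite card_ord; exact: (canRL (addKn _)). Qed.

Lemma up_card n k (H : {set {set 'I_n}}) :
  (forall A, A \in H -> #|A| = k) -> k.+1 <= n - k ->
  #|H| <= #|[set B : {set 'I_n} | (#|B| == k.+1) && [exists A in H, A \subset B]]|.
Proof.
move=> Hk hk; set U := [set B : {set 'I_n} | _].
have L : #|H| * (n - k) <= \sum_(A in H) \sum_(B in U) (A \subset B : nat).
  rewrite -sum_nat_const; apply: leq_sum => A AH.
  rewrite sum_bool_card.
  have -> : n - k = #|[set x |: A | x in ~: A]|.
    rewrite card_in_imset; first by rewrite card_compl Hk.
    move=> x y; rewrite !inE => xA yA /setP /(_ x); rewrite !inE eqxx /=.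
    by rewrite (negbTE xA) orbF => /esym /eqP.
  apply: subset_leq_card; apply/subsetP => B /imsetP[x xA ->]; rewrite in_setC in xA.
  rewrite !inE subsetUr andbT cardsU1 xA Hk //= eqxx /=.
  by apply/existsP; exists A; rewrite AH subsetUr.
have R : \sum_(B in U) \sum_(A in H) (A \subset B : nat) <= #|U| * k.+1.
  rewrite -sum_nat_const; apply: leq_sum => B; rewrite inE => /andP[/eqP cB _].
  rewrite sum_bool_card -binSn -cB -cards_draws.
  apply: subset_leq_card; apply/subsetP => A; rewrite !inE => /andP[AH AB].
  by rewrite AB (Hk _ AH) eqxx.
rewrite exchange_big in L.
have h := leq_trans L R.
rewrite -(@leq_pmul2r (n - k)); last by apply: leq_trans hk.
apply: (leq_trans h); by rewrite leq_mul2l hk orbT.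
Qed.

Lemma sd_small n s (B C : {set 'I_n}) : #|B| <= s -> (#|B :\: C| <= s) || (#|C :\: B| <= s).
Proof. by move=> h; rewrite (leq_trans (subset_leq_card (subsetDl B C)) h). Qed.

Lemma push_step n s k (F : {set {set 'I_n}}) u :
  2 * s <= n -> k < s -> s <= u ->
  close_sperner (range1 s) F ->
  (forall A, A \in F -> k <= #|A| <= u) ->
  exists G : {set {set 'I_n}}, [/\ close_sperner (range1 s) G, #|F| <= #|G| &
     forall A, A \in G -> k.+1 <= #|A| <= u].
Proof.
move=> hn hk hu cF hF.
set Fk := [set A in F | #|A| == k].
set U := [set B : {set 'I_n} | (#|B| == k.+1) && [exists A in Fk, A \subset B]].
have UP B : B \in U -> #|B| = k.+1 /\ exists2 A, A \in F & (#|A| = k /\ A \subset B).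
  rewrite inE => /andP[/eqP cB /existsP[A /andP[]]]; rewrite inE => /andP[AF /eqP cA] AB.
  split => //; by exists A.
have FkP B : B \in F -> B \notin Fk -> k.+1 <= #|B| <= u.
  move=> BF; rewrite inE BF /= => /eqP nk; have := hF B BF; case/andP=> h1 h2; rewrite h2 andbT ltn_neqAle h1 andbT; apply/eqP => e; exact: nk (esym e).
have UF B : B \in U -> B \notin F.
  move=> /UP[cB [A AF [cA AB]]]; apply/negP => BF.
  have eAB := cs_sub cF AF BF AB; move: cA; rewrite eAB cB; lia.
have anti B C : B \in (F :\: Fk) :|: U -> C \in (F :\: Fk) :|: U -> B \subset C -> B = C.
  move=> hB hC BC.
  case/setUP: hB => [/setDP[BF BFk]|BU]; case/setUP: hC => [/setDP[CF CFk]|CU].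
  - exact: cs_sub cF BF CF BC.
  - have [cC [A AF [cA AC]]] := UP C CU.
    have := FkP B BF BFk => hb.
    apply/eqP; rewrite eqEcard BC cC; lia.
  - have [cB [A AF [cA AB]]] := UP B BU.
    have eAC := cs_sub cF AF CF (subset_trans AB BC).
    have := FkP C CF CFk; rewrite -eAC cA; lia.
  - have [cB _] := UP B BU; have [cC _] := UP C CU.
    apply/eqP; rewrite eqEcard BC cC cB leqnn //.
exists ((F :\: Fk) :|: U); split.
- apply: cs_intro => B C hB hC nBC.
  have p1 : 0 < #|B :\: C|.
    rewrite cardD_gt0; apply/negP => BC; move: nBC; by rewrite (anti B C hB hC BC) eqxx.
  have p2 : 0 < #|C :\: B|.
    rewrite cardD_gt0; apply/negP => CB; move: nBC; by rewrite (anti C B hC hB CB) eqxx.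
  split => //.
  case/setUP: hB => [/setDP[BF BFk]|BU]; last first.
    by have [cB _] := UP B BU; apply: sd_small; rewrite cB.
  case/setUP: hC => [/setDP[CF CFk]|CU]; last first.
    by have [cC _] := UP C CU; rewrite orbC; apply: sd_small; rewrite cC.
  by case: (cs_elim cF BF CF nBC).
- have dis : (F :\: Fk) :&: U = set0.
    apply/setP => B; rewrite [B \in set0]inE; apply/negP => /setIP[/setDP[BF _] BU].
    by move: (UF B BU); rewrite BF.
  rewrite cardsU dis cards0 subn0.
  have hFk : Fk \subset F by apply/subsetP => A; rewrite inE => /andP[].
  have := cardsID Fk F; rewrite (setIidPr hFk) => <-.
  rewrite addnC leq_add2l.
  apply: up_card; last by lia.
  by move=> A; rewrite inE => /andP[_ /eqP].
- move=> B; case/setUP => [/setDP[BF BFk]|BU]; first exact: FkP.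
  have [cB _] := UP B BU; rewrite cB; lia.
Qed.

Lemma push_all n s u (F : {set {set 'I_n}}) m :
  2 * s <= n -> s <= u -> close_sperner (range1 s) F ->
  (forall A, A \in F -> s - m <= #|A| <= u) ->
  exists G : {set {set 'I_n}}, [/\ close_sperner (range1 s) G, #|F| <= #|G| &
     forall A, A \in G -> s <= #|A| <= u].
Proof.
move=> hn hu; elim: m F => [|m IH] F cF hF.
  by exists F; split => // A /hF; rewrite subn0.
case: (leqP s m) => hsm.
  by apply: IH => // A /hF; have -> : s - m.+1 = s - m by lia.
have hk : s - m.+1 < s by lia.
have [G [cG hFG hG]] := push_step hn hk hu cF hF.
have [G' [cG' hGG' hG']] : exists G' : {set {set 'I_n}}, [/\ close_sperner (range1 s) G', #|G| <= #|G'| &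
     forall A, A \in G' -> s <= #|A| <= u].
  apply: IH => // A /hG; have -> : (s - m.+1).+1 = s - m by lia. done.
by exists G'; split => //; apply: leq_trans hGG'.
Qed.

Section Alg.
Import GRing.Theory Num.Theory.
Local Open Scope ring_scope.

Definition Aj n (F : {set {set 'I_n}}) (j : 'I_#|F|) : {set 'I_n} := enum_val j.
Lemma AjF n (F : {set {set 'I_n}}) j : @Aj n F j \in F.
Proof. exact: enum_valP. Qed.
Lemma Aj_inj n (F : {set {set 'I_n}}) : injective (@Aj n F).
Proof. exact: enum_val_inj. Qed.
Definition vec n (F : {set {set 'I_n}}) (phi : {set 'I_n} -> rat) : 'rV[rat]_#|F| :=
  \row_j phi (Aj j).
Definition BT n lo hi := [set T : {set 'I_n} | (lo <= #|T|)%N && (#|T| <= hi)%N].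
Definition W n lo hi (F : {set {set 'I_n}}) : 'M[rat]_(#|BT n lo hi|, #|F|) :=
  \matrix_(i < #|BT n lo hi|, j < #|F|)
     (((enum_val i : {set 'I_n}) \subset @Aj n F j : nat)%:R).

Lemma ybin y r : (y * 'C(y, r) = r * 'C(y, r) + r.+1 * 'C(y, r.+1))%N.
Proof.
rewrite mul_bin_left -mulnDl; case: (leqP r y) => h.
  by rewrite addnC subnK.
by rewrite bin_small // !muln0.
Qed.

Lemma binexp (a : rat) (cs : seq rat) :
  exists q : nat -> rat, forall y : nat,
    \prod_(c <- cs) (a * y%:R + c) = \sum_(r < (size cs).+1) q r * ('C(y, r))%:R.
Proof.
elim: cs => [|c cs [q IH]].
  by exists (fun _ => 1) => y; rewrite big_nil big_ord1 bin0 mul1r.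
pose m := size cs.
exists (fun r => (if (r < m.+1)%N then q r * (a * r%:R + c) else 0) +
          (if r is r'.+1 then q r' * (a * r%:R) else 0)).
move=> y; rewrite big_cons IH mulr_sumr /=.
rewrite (eq_bigr (fun r : 'I_m.+1 => q r * (a * r%:R + c) * ('C(y, r))%:R +
                     q r * (a * r.+1%:R) * ('C(y, r.+1))%:R)); last first.
  move=> r _; have := ybin y r => /(congr1 (fun x : nat => (x%:R : rat))).
  rewrite natrD !natrM => e.
  rewrite mulrCA mulrDl -(mulrA a) e; ring.
rewrite big_split /=.
rewrite (eq_bigr (fun r : 'I_m.+2 =>
   (if (r < m.+1)%N then q r * (a * r%:R + c) else 0) * ('C(y, r))%:R +
   (if (r : nat) is r'.+1 then q r' * (a * r%:R) else 0) * ('C(y, r))%:R)); last first.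
  by move=> r _; rewrite mulrDl.
rewrite big_split /=; congr (_ + _).
  rewrite [in RHS]big_ord_recr /= ltnn mul0r addr0.
  by apply: eq_bigr => r _; rewrite /= ltn_ord.
rewrite [in RHS]big_ord_recl /= mul0r add0r; apply: eq_bigr => r _.
by rewrite /bump /= add1n.
Qed.


Definition g s (t : nat) : rat := \prod_(1 <= l < s.+1) (t%:R - l%:R).

Lemma g_zero s t : (1 <= t <= s)%N -> g s t = 0.
Proof.
move=> /andP[h1 h2]; apply/eqP; rewrite /g prodf_seq_eq0; apply/hasP.
by exists t; rewrite ?mem_index_iota ?h1 ?ltnS ?h2 //= subrr.
Qed.

Lemma g0_neq0 s : g s 0 != 0.
Proof.
rewrite /g prodf_seq_neq0; apply/allP => l; rewrite mem_index_iota => /andP[h _].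
by rewrite /= sub0r oppr_eq0 pnatr_eq0; case: l h.
Qed.

Lemma cardD_le n (A B : {set 'I_n}) : (#|A| <= #|B|)%N -> (#|A :\: B| <= #|B :\: A|)%N.
Proof. move=> h; rewrite !cardsD setIC; exact: leq_sub2r. Qed.

Lemma M_free n s (F : {set {set 'I_n}}) : close_sperner (range1 s) F ->
  row_free (\matrix_(i, j) g s #|@Aj n F i :\: @Aj n F j|).
Proof.
move=> cF; apply/inj_row_free => v hv.
apply/rowP => i; rewrite mxE.
apply/eqP; apply: contraT => nzi.
have [i0 nz0 max0] := @arg_maxnP _ i (fun k => v 0 k != 0) (fun k => #|@Aj n F k|) nzi.
have := congr1 (fun w : 'rV_#|F| => w 0 i0) hv; rewrite !mxE (bigD1 i0) //= big1 ?addr0.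
  rewrite mxE setDv cards0 => /eqP; rewrite mulf_eq0 (negbTE nz0) (negbTE (g0_neq0 s)).
  done.
move=> k nk; rewrite mxE.
case: (eqVneq (v 0 k) 0) => [->|nzk]; first by rewrite mul0r.
rewrite g_zero ?mulr0 //.
have hle := max0 k nzk.
have nA : @Aj n F k != @Aj n F i0 by apply: contra nk => /eqP /Aj_inj ->.
case: (cs_elim cF (AjF k) (AjF i0) nA) => p1 p2 h3.
rewrite p1 /=; case/orP: h3 => // h; exact: leq_trans (cardD_le hle) h.
Qed.

Definition wT n (F : {set {set 'I_n}}) (T : {set 'I_n}) : 'rV[rat]_#|F| :=
  vec F (fun X => ((T \subset X : nat))%:R).

Lemma inner_sum n (T A : {set 'I_n}) r : T \subset A ->
  \sum_(U : {set 'I_n} | (U \subset ~: T) && (#|U| == r)) ((T :|: U \subset A : nat)%:R : rat)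
  = ('C(#|A :\: T|, r))%:R.
Proof.
move=> TA; rewrite -natr_sum; congr (_%:R).
under eq_bigr => U _ do rewrite subUset TA /=.
rewrite sum_bool_card -cards_draws; apply: eq_card => U; rewrite !inE setDE subsetI.
by case: (U \subset A); case: (U \subset ~: T); case: (#|U| == r).
Qed.

Lemma q0_eval (q : nat -> rat) m (P : rat) :
  (forall y : nat, (y = 0)%N -> P = \sum_(r < m.+1) q r * ('C(y, r))%:R) -> q 0%N = P.
Proof.
move=> h; rewrite (h 0%N) // big_ord_recl bin0 mulr1 big1 ?addr0 //.
by move=> r _; rewrite bin0n /= mulr0.
Qed.

Lemma band_sub n lo hi (F : {set {set 'I_n}}) T :
  T \in BT n lo hi -> (wT F T <= W lo hi F)%MS.
Proof.
move=> TB; apply: (eq_row_sub (enum_rank_in TB T)); apply/rowP => j.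
by rewrite !mxE (enum_rankK_in TB TB).
Qed.

Lemma wT_sub n s (F : {set {set 'I_n}}) (T : {set 'I_n}) :
  (2 * s <= n)%N -> (n < 3 * s)%N ->
  (forall A, A \in F -> s <= #|A| <= n - s)%N ->
  (#|T| <= s)%N -> (wT F T <= W (3 * s - n) s F)%MS.
Proof.
move=> hn h3 hF.
suff H : forall k (T : {set 'I_n}), (#|T| <= s)%N -> (s - k <= #|T|)%N ->
    (wT F T <= W (3 * s - n) s F)%MS.
  by move=> hT; apply: (H s) => //; rewrite subnn.
elim=> [|k IH] {}T hTs hk.
  apply: band_sub; rewrite inE hTs andbT; move: hk; rewrite subn0; lia.
case: (leqP (s - k) #|T|) => hk'; first exact: IH.
case: (leqP (3 * s - n) #|T|) => hlo.
  by apply: band_sub; rewrite inE hTs hlo.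
set t := #|T|.
pose cs := [seq (t%:R - l%:R : rat) | l <- index_iota s (n - s).+1].
have scs : size cs = ((n - s).+1 - s)%N by rewrite size_map size_iota.
have [q hq] := binexp 1 cs.
have q0 : q 0%N != 0.
  rewrite (@q0_eval q (size cs) (\prod_(c <- cs) c)); last first.
    move=> y ->; rewrite -(hq 0%N); apply: eq_bigr => c _.
    by rewrite mul1r mulr0n add0r.
  rewrite big_map prodf_seq_neq0; apply/allP => l; rewrite mem_index_iota => /andP[hk1 _].
  by rewrite /= subr_eq0 eqr_nat; apply/eqP; lia.
pose S r := \sum_(U : {set 'I_n} | (U \subset ~: T) && (#|U| == r)) wT F (T :|: U).
have vid : \sum_(r < (size cs).+1) q r *: S r = 0.
  apply/rowP => j; rewrite [RHS]mxE summxE.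
  under eq_bigr => r _ do rewrite mxE summxE.
  under eq_bigr => r _ do under eq_bigr => U _ do rewrite mxE.
  case: (boolP (T \subset @Aj n F j)) => TA.
    under eq_bigr => r _ do rewrite inner_sum //.
    rewrite -hq big_map; apply/eqP; rewrite prodf_seq_eq0; apply/hasP.
    have cA : #|@Aj n F j| = (t + #|@Aj n F j :\: T|)%N.
      rewrite cardsD (setIidPr TA); have := subset_leq_card TA; rewrite -/t; lia.
    have := hF _ (AjF j) => /andP[hA1 hA2].
    exists #|@Aj n F j|; first by rewrite mem_index_iota; apply/andP; split; lia.
    apply/eqP; rewrite /= mul1r cA natrD; ring.
  apply: big1 => r _; rewrite big1 ?mulr0 // => U _.
  by rewrite subUset (negbTE TA).
move: vid; rewrite big_ord_recl.
have S0 : S 0%N = wT F T.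
  rewrite /S (big_pred1 set0); first by rewrite setU0.
  move=> U; rewrite /= cards_eq0.
  by case: (U =P set0) => [->|]; rewrite ?sub0set ?andbF.
rewrite S0 => /eqP; rewrite addr_eq0 => /eqP e.
have -> : wT F T = (q 0%N)^-1 *: (q 0%N *: wT F T) by rewrite scalerA mulVf // scale1r.
rewrite e; apply: scalemx_sub; rewrite -scaleN1r; apply: scalemx_sub.
apply: summx_sub => r _; apply: scalemx_sub; apply: summx_sub => U /andP[UT /eqP cU].
have dis : T :&: U = set0.
  apply/setP => x; rewrite !inE; apply/negP => /andP[xT xU].
  by move/subsetP: UT => /(_ x xU); rewrite inE xT.
have cTU : #|T :|: U| = (t + (lift ord0 r))%N by rewrite cardsU dis cards0 subn0 cU.
have hr : (r < (n - s).+1 - s)%N by rewrite -scs ltn_ord.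
rewrite lift0 in cTU.
apply: IH; rewrite cTU; lia.
Qed.

Definition gf n s (A X : {set 'I_n}) := g s #|A :\: X|.

Lemma f_sub n s (F : {set {set 'I_n}}) (A : {set 'I_n}) :
  (2 * s <= n)%N -> (n < 3 * s)%N ->
  (forall A, A \in F -> s <= #|A| <= n - s)%N ->
  (vec F (gf s A) <= W (3 * s - n) s F)%MS.
Proof.
move=> hn h3 hF.
pose cs := [seq (#|A|%:R - l%:R : rat) | l <- index_iota 1 s.+1].
have [q hq] := binexp (-1) cs.
have scs : size cs = s by rewrite size_map size_iota subn1.
have -> : vec F (gf s A) =
  \sum_(r < (size cs).+1) q r *: \sum_(T : {set 'I_n} | (T \subset A) && (#|T| == r)) wT F T.
  apply/rowP => j; rewrite mxE summxE /gf.
  under eq_bigr => r _ do rewrite mxE summxE.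
  under eq_bigr => r _ do under eq_bigr => U _ do rewrite mxE.
  have e r : \sum_(T : {set 'I_n} | (T \subset A) && (#|T| == r))
      (((T \subset @Aj n F j : nat))%:R : rat) = ('C(#|A :&: @Aj n F j|, r))%:R.
    rewrite -natr_sum sum_bool_card -cards_draws; congr (_%:R); apply: eq_card => T.
    rewrite !inE subsetI.
    by case: (T \subset A); case: (T \subset @Aj n F j); case: (#|T| == r).
  under eq_bigr => r _ do rewrite e.
  rewrite -hq /g big_map; apply: eq_bigr => l _.
  rewrite cardsD natrB ?subset_leq_card ?subsetIl //; ring.
apply: summx_sub => r _; apply: scalemx_sub; apply: summx_sub => T /andP[_ /eqP cT].
apply: wT_sub => //; rewrite cT -ltnS -scs; exact: ltn_ord.
Qed.

Lemma card_band n lo hi :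
  #|BT n lo hi| = (\sum_(lo <= i < hi.+1) 'C(n, i))%N.
Proof.
rewrite (eq_bigr (fun i => #|[set T : {set 'I_n} | #|T| == i]|)); last first.
  by move=> i _; rewrite card_draws card_ord.
rewrite (eq_bigr (fun i => \sum_(T : {set 'I_n}) (#|T| == i : nat))%N); last first.
  move=> i _; rewrite sum_bool_card; apply: eq_card => T; by rewrite !inE.
rewrite exchange_big /=.
rewrite /BT -(@sum_bool_card _ predT) /=; apply: eq_bigr => T _.
rewrite (eq_bigr (fun i => if #|T| == i then 1%N else 0%N)); last by move=> i _; case: (_ == _).
rewrite -big_mkcond sum1_count.
rewrite (@eq_count _ _ (pred1 #|T|)); last by move=> i; rewrite /= eq_sym.
by rewrite count_uniq_mem ?iota_uniq // mem_index_iota ltnS.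
Qed.

Lemma band_bound n s (F : {set {set 'I_n}}) :
  (2 * s <= n)%N -> (n < 3 * s)%N -> close_sperner (range1 s) F ->
  (forall A, A \in F -> s <= #|A| <= n - s)%N ->
  (#|F| <= \sum_(3 * s - n <= i < s.+1) 'C(n, i))%N.
Proof.
move=> hn h3 cF hF.
set M := \matrix_(i, j) g s #|@Aj n F i :\: @Aj n F j|.
have fr : row_free M := M_free cF.
have MW : (M <= W (3 * s - n) s F)%MS.
  apply/row_subP => i.
  have -> : row i M = vec F (fun X => g s #|@Aj n F i :\: X|) by apply/rowP => j; rewrite !mxE.
  exact: f_sub.
have := mxrankS MW; rewrite (eqP fr) => h.
rewrite -card_band; exact: leq_trans h (rank_leq_row _).
Qed.

End Alg.

Theorem mainTheorem6 (n s : nat) (F : {set {set 'I_n}}) :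
  n + 1 <= 3 * s -> 2 * s <= n ->
  close_sperner (range1 s) F ->
  #|F| <= \sum_(3 * s - n <= i < s.+1) 'C(n, i).
Proof.
move=> h3 hn cF.
have hsn : s <= n by lia.
have [F1 [c1 h1 s1]] := @push_all n s n F s hn hsn cF
  (fun A _ => ltac:(rewrite subnn /=; have := max_card A; rewrite card_ord; done)).
pose F2 := [set ~: A | A in F1].
have c2 : close_sperner (range1 s) F2 := cs_compl c1.
have e2 : #|F2| = #|F1| by rewrite card_imset //; exact: setC_inj.
have s2 : forall A, A \in F2 -> s - s <= #|A| <= n - s.
  move=> A /imsetP[B BF1 ->]; rewrite subnn /= card_compl.
  have := s1 B BF1 => /andP[hb _]; exact: leq_sub2l.
have hu : s <= n - s by lia.
have [F3 [c3 h3' s3]] := @push_all n s (n - s) F2 s hn hu c2 s2.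
apply: leq_trans h1 _; rewrite -e2; apply: leq_trans h3' _.
apply: band_bound => //; lia.
Qed.
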